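(* Let $D^p$ be an instance of a PDB schema $\mathcal{D}^p$ that is consistent w.r.t. a set $\mathcal{IC}$ of denial constraints, let $T$ be a set of tuples of $D^p$, and let $H=HG(D^p,\mathcal{IC})$. If either (i) the tuples in $T$ are pairwise disconnected in $H$, or (ii) $Int(T,H)$ is a matryoshka, then $p^{\min}(T)=\max\{0,\sum_{t\in T}p(t)-|T|+1\}$. Otherwise, $\max\{0,\sum_{t\in T}p(t)-|T|+1\}$ is a lower bound for $p^{\min}(T)$.
   Context: A PDB instance $D^p$ is a finite set of tuples, each with a probability $p(t)\in[0,1]$. Possible worlds are subsets of its tuples; an interpretation is a probability distribution $Pr$ on the possible worlds with $\sum_{w\ni t}Pr(w)=p(t)$ for each tuple $t$. Denial constraints are formulas $\forall\vec x.\neg[R_1(\vec x_1)\wedge\dots\wedge R_m(\vec x_m)\wedge\phi]$ with $\phi$ a conjunction of comparisons ($=,\neq,\le,\ge,<,>$) among variables/constants. A model w.r.t. $\mathcal{IC}$ is an interpretation giving probability $0$ to every world violating a constraint of $\mathcal{IC}$; $D^p$ is consistent if a model exists. A conflicting set is a minimal set of tuples such that every world containing it violates $\mathcal{IC}$; the conflict hypergraph $HG(D^p,\mathcal{IC})$ has the tuples as nodes and the conflicting sets as hyperedges. $p^{\min}(T)=\min_{Pr \text{ model}}\sum_{w\supseteq T}Pr(w)$. Two nodes are disconnected if no path (sequence of distinct hyperedges, consecutive ones intersecting, the first containing one node and the last the other) joins them. $Int(T,H)$ denotes the set of intersections of $T$ with the hyperedges of $H$. A set of sets is a matryoshka if it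 is totally ordered by strict inclusion. *)

(* Defs.v *)
From HB Require Import structures.
From mathcomp Require Import all_boot all_order all_algebra.
From mathcomp Require Import reals.
Set Implicit Arguments. Unset Strict Implicit. Unset Printing Implicit Defensive.
Import Order.TTheory GRing.Theory Num.Theory.
Local Open Scope ring_scope.

Definition AllIn (A : Type) (P : A -> Prop) (s : seq A) : Prop :=
  foldr (fun x acc => P x /\ acc) True s.
Definition ExIn (A : Type) (P : A -> Prop) (s : seq A) : Prop :=
  foldr (fun x acc => P x \/ acc) False s.

Section Syntax.
Variables (disp : Order.disp_t) (V : orderType disp) (Rel : eqType).

Inductive term := TVar of nat | TConst of V.
Inductive cmp_op := CEq | CNeq | CLe | CGe | CLt | CGt.
Record comparison := Cmp { c_op : cmp_op; c_lhs : term; c_rhs : term }.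
Record atom := Atom { a_rel : Rel; a_args : seq term }.
(* forall x. ~ [R_1(x_1) /\ ... /\ R_m(x_m) /\ phi], phi a conjunction of
   comparisons. *)
Record denial := Denial { dc_atoms : seq atom; dc_phi : seq comparison }.

Definition dbtuple := (Rel * seq V)%type.

Definition eval_term (s : nat -> V) (t : term) : V :=
  match t with TVar x => s x | TConst c => c end.

Definition eval_cmp (s : nat -> V) (c : comparison) : bool :=
  let a := eval_term s (c_lhs c) in
  let b := eval_term s (c_rhs c) in
  match c_op c with
  | CEq => a == b
  | CNeq => a != b
  | CLe => (a <= b)%O
  | CGe => (b <= a)%O
  | CLt => (a < b)%O
  | CGt => (b < a)%O
  end.

Definition wf_tuple (ar : Rel -> nat) (t : dbtuple) : Prop := size t.2 = ar t.1.
Definition wf_atom (ar : Rel -> nat) (A : atom) : Prop :=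
  size (a_args A) = ar (a_rel A).
Definition wf_denial (ar : Rel -> nat) (dc : denial) : Prop :=
  AllIn (wf_atom ar) (dc_atoms dc).

(* The tuples of the PDB instance are indexed by a finite type I, via an
   injective map tup : I -> dbtuple; a possible world is a subset of I. *)
Variables (I : finType) (tup : I -> dbtuple).

Definition violates_dc (w : {set I}) (dc : denial) : Prop :=
  exists s : nat -> V,
    AllIn (fun A => exists2 i, i \in w & tup i = (a_rel A, map (eval_term s) (a_args A)))
          (dc_atoms dc)
    /\ AllIn (fun c => eval_cmp s c) (dc_phi dc).

Definition violates (IC : seq denial) (w : {set I}) : Prop :=
  ExIn (violates_dc w) IC.

Definition all_supersets_violate (IC : seq denial) (S : {set I}) : Prop :=
  forall w : {set I}, S \subset w -> violates IC w.

Definition conflicting_set (IC : seq denial) (S : {set I}) : Prop :=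
  all_supersets_violate IC S /\
  forall S' : {set I}, S' \proper S -> ~ all_supersets_violate IC S'.

Definition hyperedge (IC : seq denial) (e : {set I}) : Prop := conflicting_set IC e.

Definition hg_connected (IC : seq denial) (t t' : I) : Prop :=
  exists (e1 : {set I}) (es : seq {set I}),
    [/\ uniq (e1 :: es),
        AllIn (hyperedge IC) (e1 :: es),
        path (fun A B : {set I} => ~~ [disjoint A & B]) e1 es,
        t \in e1 &
        t' \in last e1 es].

Definition hg_disconnected (IC : seq denial) (t t' : I) : Prop :=
  ~ hg_connected IC t t'.

Definition pairwise_disconnected (IC : seq denial) (T : {set I}) : Prop :=
  forall t t', t \in T -> t' \in T -> t != t' -> hg_disconnected IC t t'.

Definition in_Int (IC : seq denial) (T A : {set I}) : Prop :=
  exists2 e, hyperedge IC e & A = T :&: e.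

Definition matryoshka (F : {set I} -> Prop) : Prop :=
  forall A B, F A -> F B -> [\/ A = B, A \proper B | B \proper A].

Variables (R : realType) (p : I -> R).

Definition interpretation (Pr : {set I} -> R) : Prop :=
  [/\ forall w, 0 <= Pr w,
      \sum_(w : {set I}) Pr w = 1 &
      forall i, \sum_(w : {set I} | i \in w) Pr w = p i].

Definition model (IC : seq denial) (Pr : {set I} -> R) : Prop :=
  interpretation Pr /\ forall w, violates IC w -> Pr w = 0.

Definition pdb_consistent (IC : seq denial) : Prop := exists Pr, model IC Pr.

Definition prob_all (Pr : {set I} -> R) (T : {set I}) : R :=
  \sum_(w : {set I} | T \subset w) Pr w.

Definition is_pmin (IC : seq denial) (T : {set I}) (v : R) : Prop :=
  (exists2 Pr, model IC Pr & prob_all Pr T = v) /\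
  (forall Pr, model IC Pr -> v <= prob_all Pr T).

Definition pmin_lower_bound (IC : seq denial) (T : {set I}) (v : R) : Prop :=
  forall Pr, model IC Pr -> v <= prob_all Pr T.

Definition frechet_bound (T : {set I}) : R :=
  Num.max 0 (\sum_(t in T) p t - #|T|%:R + 1).

End Syntax.

(* Main.v *)
Require Import Defs.
From HB Require Import structures.
From mathcomp Require Import all_boot all_order all_algebra.
From mathcomp Require Import reals boolp.
From Stdlib Require Import Classical.
From mathcomp Require Import lra ring zify.
Import Order.TTheory GRing.Theory Num.Theory.
Set Implicit Arguments. Unset Strict Implicit. Unset Printing Implicit Defensive.

Lemma AllInP (A : eqType) (P : A -> Prop) (s : seq A) :
  AllIn P s <-> (forall x, x \in s -> P x).
Proof.
elim: s => [|x s IH] /=; first by split => // _ y; rewrite in_nil.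
split.
- move=> [Px /IH H] y; rewrite in_cons => /orP [/eqP -> //|]; exact: H.
- move=> H; split; first by apply: H; rewrite mem_head.
  by apply/IH => y ys; apply: H; rewrite in_cons ys orbT.
Qed.

Lemma AllIn_mono (A : Type) (P Q : A -> Prop) (s : seq A) :
  (forall x, P x -> Q x) -> AllIn P s -> AllIn Q s.
Proof. move=> H; elim: s => [|x s IH] //= [/H ? /IH ?]; by split. Qed.

Lemma ExIn_mono (A : Type) (P Q : A -> Prop) (s : seq A) :
  (forall x, P x -> Q x) -> ExIn P s -> ExIn Q s.
Proof. move=> H; elim: s => [|x s IH] //= [/H ?|/IH ?]; by [left|right]. Qed.

Section Logic.
Variables (disp : Order.disp_t) (V : orderType disp) (Rel : eqType).
Variables (I : finType) (tup : I -> dbtuple V Rel) (IC : seq (denial V Rel)).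

Lemma violates_mono (w w' : {set I}) :
  w \subset w' -> violates tup IC w -> violates tup IC w'.
Proof.
move=> /subsetP sw; apply: ExIn_mono => dc [s [H1 H2]]; exists s; split=> //.
by apply: AllIn_mono H1 => A [i iw Hi]; exists i => //; apply: sw.
Qed.

Lemma hyperedge_violates (e w : {set I}) :
  hyperedge tup IC e -> e \subset w -> violates tup IC w.
Proof. by move=> [H _] /H. Qed.

Lemma asv_hyperedge n (S : {set I}) : #|S| = n ->
  all_supersets_violate tup IC S -> exists2 e, hyperedge tup IC e & e \subset S.
Proof.
elim: n {-2}n (leqnn n) S => [|n IH] m.
- rewrite leqn0 => /eqP -> S cS H; exists S => //; split=> // S' /proper_card.
  by rewrite cS.
- move=> lem S cS H.
  case: (classic (conflicting_set tup IC S)) => [C|NC]; first by exists S.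
  have [S' [pS' H']] : exists S' : {set I}, S' \proper S /\ all_supersets_violate tup IC S'.
    apply: NNPP => N; apply: NC; split=> // S' pS' H'; apply: N; by exists S'.
  have := proper_card pS'; rewrite cS => lt.
  have [|e he se] := IH #|S'| _ S' erefl H'; first by rewrite -ltnS (leq_trans lt).
  by exists e => //; apply: subset_trans se (proper_sub pS').
Qed.

Lemma violates_hyperedge (w : {set I}) :
  violates tup IC w -> exists2 e, hyperedge tup IC e & e \subset w.
Proof.
move=> H; apply: (@asv_hyperedge #|w|) => // w' sw; exact: violates_mono H.
Qed.

End Logic.

Section Swap.
Local Open Scope ring_scope.
Variables (disp : Order.disp_t) (V : orderType disp) (Rel : eqType).
Variables (I : finType) (tup : I -> dbtuple V Rel) (IC : seq (denial V Rel)).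
Variables (R : realType) (p : I -> R).

Local Notation W := {set I}.

Lemma sum_ind (Pr : W -> R) (P : pred W) :
  \sum_(w | P w) Pr w = \sum_w Pr w * (P w)%:R.
Proof. by rewrite big_mkcond; apply: eq_bigr => w _; case: (P w); rewrite ?mulr1 ?mulr0. Qed.

Lemma sum_pick (s : W) (g : W -> R) : \sum_w (w == s)%:R * g w = g s.
Proof.
rewrite (bigD1 s) //= eqxx mul1r big1 ?addr0 // => w /negbTE ->; by rewrite mul0r.
Qed.

Variables (Pr : W -> R) (E F : pred W) (s1 s2 : W -> W -> W).
Hypothesis Pr0 : forall w, 0 <= Pr w.
Hypothesis Pr1 : \sum_w Pr w = 1.

Let EF w := E w && F w.
Let NN w := ~~ E w && ~~ F w.
Let a := \sum_w Pr w * (EF w)%:R.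
Let b := \sum_w Pr w * (NN w)%:R.
Let m := if a <= b then a else b.
Let c := m / (a * b).
Let K w1 w2 := Pr w1 * (EF w1)%:R * (Pr w2 * (NN w2)%:R).

Definition Pr' w := Pr w - c * (b * (Pr w * (EF w)%:R) + a * (Pr w * (NN w)%:R))
  + c * \sum_w1 \sum_w2 K w1 w2 * ((s1 w1 w2 == w)%:R + (s2 w1 w2 == w)%:R).

Lemma a_ge0 : 0 <= a.
Proof. by apply: sumr_ge0 => w _; apply: mulr_ge0. Qed.
Lemma b_ge0 : 0 <= b.
Proof. by apply: sumr_ge0 => w _; apply: mulr_ge0. Qed.

Lemma m_cases : (m = a /\ a <= b) \/ (m = b /\ b < a).
Proof. rewrite /m; case: ifP => h; [left|right] => //; split => //; by rewrite ltNge h. Qed.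

Lemma cab : c * (a * b) = m.
Proof.
have ha := a_ge0; have hb := b_ge0.
have [ab0|ab0] := eqVneq (a * b) 0.
  rewrite ab0 mulr0; move: ab0 => /eqP; rewrite mulf_eq0 => /orP [] /eqP e;
  case: m_cases => [[-> h]|[-> h]]; lra.
by rewrite /c divfK.
Qed.

Lemma c_ge0 : 0 <= c.
Proof.
rewrite /c; apply: divr_ge0; last by apply: mulr_ge0; [apply: a_ge0|apply: b_ge0].
by case: m_cases => [[-> _]|[-> _]]; [apply: a_ge0|apply: b_ge0].
Qed.

Lemma cb_le1 : c * b <= 1.
Proof.
have ha := a_ge0; have hb := b_ge0; have hc := c_ge0; have h := cab.
have ma : m <= a by case: m_cases => [[-> _]|[-> /ltW]].
have [a0|a0] := eqVneq a 0.
  by rewrite /c a0 mul0r invr0 mulr0 mul0r.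
have apos : 0 < a by rewrite lt_def a0 ha.
nra.
Qed.

Lemma ca_le1 : c * a <= 1.
Proof.
have ha := a_ge0; have hb := b_ge0; have hc := c_ge0; have h := cab.
have mb : m <= b by case: m_cases => [[-> ]|[-> _]].
have [b0|b0] := eqVneq b 0.
  by rewrite /c b0 mulr0 invr0 mulr0 mul0r.
have bpos : 0 < b by rewrite lt_def b0 hb.
nra.
Qed.

Lemma Pr'_ge0 w : 0 <= Pr' w.
Proof.
rewrite /Pr'; apply: addr_ge0; last first.
  apply: mulr_ge0; first exact: c_ge0.
  apply: sumr_ge0 => w1 _; apply: sumr_ge0 => w2 _; apply: mulr_ge0.
    by apply: mulr_ge0; apply: mulr_ge0 => //; apply: mulr_ge0.
  by apply: addr_ge0.
have h1 := cb_le1; have h2 := ca_le1; have hc := c_ge0; have hw := Pr0 w.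
rewrite /EF /NN; case: (E w); case: (F w) => /=; rewrite ?mulr1 ?mulr0 ?addr0 ?add0r ?mulr0 ?subr0 //; nra.
Qed.

Lemma Pr'_expect (g : W -> R) :
  \sum_w Pr' w * g w = \sum_w Pr w * g w
    - c * \sum_w1 \sum_w2 K w1 w2 * (g w1 + g w2 - g (s1 w1 w2) - g (s2 w1 w2)).
Proof.
have e1 : \sum_w b * (Pr w * (EF w)%:R) * g w = \sum_w1 \sum_w2 K w1 w2 * g w1.
  apply: eq_bigr => w1 _; rewrite /b mulr_suml mulr_suml; apply: eq_bigr => w2 _.
  rewrite /K; ring.
have e2 : \sum_w a * (Pr w * (NN w)%:R) * g w = \sum_w1 \sum_w2 K w1 w2 * g w2.
  rewrite exchange_big; apply: eq_bigr => w2 _; rewrite /a mulr_suml mulr_suml.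
  apply: eq_bigr => w1 _; rewrite /K; ring.
have e3 : \sum_w (\sum_w1 \sum_w2 K w1 w2 * ((s1 w1 w2 == w)%:R + (s2 w1 w2 == w)%:R)) * g w
   = \sum_w1 \sum_w2 K w1 w2 * (g (s1 w1 w2) + g (s2 w1 w2)).
  under eq_bigr do rewrite mulr_suml.
  rewrite exchange_big; apply: eq_bigr => w1 _.
  under eq_bigr do rewrite mulr_suml.
  rewrite exchange_big; apply: eq_bigr => w2 _.
  under eq_bigr do rewrite -mulrA mulrDl.
  rewrite -mulr_sumr big_split /= (eq_bigr (fun w => (w == s1 w1 w2)%:R * g w)).
    rewrite sum_pick (eq_bigr (fun w => (w == s2 w1 w2)%:R * g w)) ?sum_pick //.
    by move=> w _; rewrite eq_sym.
  by move=> w _; rewrite eq_sym.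
rewrite (eq_bigr (fun w => Pr w * g w - c * (b * (Pr w * (EF w)%:R) * g w
   + a * (Pr w * (NN w)%:R) * g w) + c * ((\sum_w1 \sum_w2 K w1 w2 *
   ((s1 w1 w2 == w)%:R + (s2 w1 w2 == w)%:R)) * g w))); last by move=> w _; rewrite /Pr'; ring.
rewrite big_split /= big_split /= sumrN -!mulr_sumr big_split /= e1 e2 e3.
have e4 : \sum_w1 \sum_w2 K w1 w2 * (g w1 + g w2 - g (s1 w1 w2) - g (s2 w1 w2)) =
  \sum_w1 \sum_w2 K w1 w2 * g w1 + \sum_w1 \sum_w2 K w1 w2 * g w2
  - \sum_w1 \sum_w2 K w1 w2 * (g (s1 w1 w2) + g (s2 w1 w2)).
  rewrite -big_split -sumrB; apply: eq_bigr => w1 _.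
  rewrite -big_split -sumrB; apply: eq_bigr => w2 _ /=; ring.
rewrite e4; ring.
Qed.

Hypothesis hS : forall w1 w2, E w1 && F w1 -> ~~ E w2 && ~~ F w2 ->
  [/\ E (s1 w1 w2), ~~ F (s1 w1 w2), ~~ E (s2 w1 w2) & F (s2 w1 w2)].
Hypothesis hM : forall w1 w2 i, E w1 && F w1 -> ~~ E w2 && ~~ F w2 ->
  ((i \in s1 w1 w2) + (i \in s2 w1 w2) = (i \in w1) + (i \in w2))%N.
Hypothesis hV : forall w1 w2, E w1 && F w1 -> ~~ E w2 && ~~ F w2 ->
  ~ violates tup IC w1 -> ~ violates tup IC w2 ->
  ~ violates tup IC (s1 w1 w2) /\ ~ violates tup IC (s2 w1 w2).
Hypothesis Prv : forall w, violates tup IC w -> Pr w = 0.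

Lemma K_cases (w1 w2 : W) : K w1 w2 = 0 \/
  [/\ E w1 && F w1, ~~ E w2 && ~~ F w2, Pr w1 != 0 & Pr w2 != 0].
Proof.
rewrite /K /EF /NN; case: (E w1 && F w1); last by left; rewrite mulr0 mul0r.
case: (~~ E w2 && ~~ F w2); last by left; rewrite !mulr0.
have [->|h1] := eqVneq (Pr w1) 0; first by left; rewrite !mul0r.
have [->|h2] := eqVneq (Pr w2) 0; first by left; rewrite mul0r mulr0.
by right.
Qed.

Lemma Pr'_sum : \sum_w Pr' w = 1.
Proof.
rewrite -Pr1 -(eq_bigr _ (fun w _ => mulr1 (Pr' w))) Pr'_expect.
rewrite [X in _ - c * X]big1 ?mulr0 ?subr0; last first.
  by move=> w1 _; rewrite big1 // => w2 _; rewrite addrK subrr mulr0.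
by apply: eq_bigr => w _; rewrite mulr1.
Qed.

Lemma Pr'_marg (i : I) : \sum_(w : W | i \in w) Pr' w = \sum_(w : W | i \in w) Pr w.
Proof.
rewrite (sum_ind Pr') (sum_ind Pr) Pr'_expect [X in c * X]big1 ?mulr0 ?subr0 // => w1 _.
apply: big1 => w2 _; case: (K_cases w1 w2) => [->|[h1 h2 _ _]]; first by rewrite mul0r.
have := hM i h1 h2 => /(congr1 (fun n : nat => n%:R : R)); rewrite !natrD => e.
by rewrite -addrA -opprD e subrr mulr0.
Qed.

Lemma Pr'_viol (w : W) : violates tup IC w -> Pr' w = 0.
Proof.
move=> vw; rewrite /Pr' Prv // !mul0r !mulr0 addr0 mulr0 subrr add0r.
apply/eqP; rewrite mulf_eq0; apply/orP; right; apply/eqP.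
apply: big1 => w1 _; apply: big1 => w2 _.
case: (K_cases w1 w2) => [->|[h1 h2 n1 n2]]; first by rewrite mul0r.
have nv1 : ~ violates tup IC w1 by move=> /Prv; apply/eqP.
have nv2 : ~ violates tup IC w2 by move=> /Prv; apply/eqP.
have [v1 v2] := hV h1 h2 nv1 nv2.
have -> : (s1 w1 w2 == w) = false by apply/negP => /eqP e; apply: v1; rewrite e.
have -> : (s2 w1 w2 == w) = false by apply/negP => /eqP e; apply: v2; rewrite e.
by rewrite addr0 mulr0.
Qed.

Lemma Pr'_EF : \sum_w Pr' w * (E w && F w)%:R = a - m.
Proof.
rewrite Pr'_expect -cab; congr (_ - c * _).
rewrite /a /b mulr_suml; apply: eq_bigr => w1 _; rewrite mulr_sumr; apply: eq_bigr => w2 _.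
rewrite -[RHS]/(K w1 w2).
case: (K_cases w1 w2) => [->|[h1 h2 _ _]]; first by rewrite !mul0r.
have [e1 f1 e2 f2] := hS h1 h2; rewrite h1 (negbTE f1) andbF (negbTE e2) /=.
by move/andP: h2 => [/negbTE -> _] /=; rewrite !subr0 addr0 mulr1.
Qed.

Lemma PEF_diff : \sum_w Pr w * (E w)%:R + \sum_w Pr w * (F w)%:R - 1 = a - b.
Proof.
transitivity (\sum_w Pr w * (E w)%:R + \sum_w Pr w * (F w)%:R - \sum_w Pr w);
  first by rewrite Pr1.
rewrite -big_split /= /a /b -!sumrB; apply: eq_bigr => w _.
by rewrite /EF /NN; case: (E w); case: (F w) => /=; ring.
Qed.

Lemma Pr'_final : \sum_w Pr' w * (E w && F w)%:R =
  Num.max 0 (\sum_w Pr w * (E w)%:R + \sum_w Pr w * (F w)%:R - 1).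
Proof.
rewrite Pr'_EF PEF_diff; case: m_cases => [[-> h]|[-> h]].
  by rewrite subrr max_l // subr_le0.
by rewrite max_r // subr_ge0 ltW.
Qed.

Lemma Pr'_model : model tup p IC Pr -> model tup p IC Pr'.
Proof.
move=> [[_ _ hp] _]; split; last exact: Pr'_viol.
split; [exact: Pr'_ge0 | exact: Pr'_sum | move=> i; by rewrite Pr'_marg hp].
Qed.

End Swap.

Section Main.
Local Open Scope ring_scope.
Variables (disp : Order.disp_t) (V : orderType disp) (Rel : eqType).
Variables (I : finType) (tup : I -> dbtuple V Rel) (IC : seq (denial V Rel)).
Variables (R : realType) (p : I -> R).
Local Notation W := {set I}.

Definition Fp (T : W) : R := \sum_(u in T) p u - #|T|%:R + 1.

Lemma Fp_step (t : I) (T : W) : t \in T -> Fp T = Fp (T :\ t) + p t - 1.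
Proof.
move=> tT; rewrite /Fp (big_setD1 t) //= {1}(cardsD1 t T) tT natrD /=; ring.
Qed.

Lemma Fp0 : Fp set0 = 1.
Proof. by rewrite /Fp big_set0 cards0 subrr add0r. Qed.

Lemma sub_split (t : I) (T w : W) : t \in T -> (T \subset w) = (T :\ t \subset w) && (t \in w).
Proof. by move=> tT; rewrite -{1}(setD1K tT) subUset sub1set andbC. Qed.

Lemma prob_allE (Pr : W -> R) (T : W) : prob_all Pr T = \sum_w Pr w * (T \subset w)%:R.
Proof. exact: sum_ind. Qed.

Lemma margE (Pr : W -> R) (t : I) : interpretation p Pr -> \sum_w Pr w * (t \in w)%:R = p t.
Proof. by move=> [_ _ h]; rewrite -sum_ind h. Qed.

Lemma two_event (Pr : W -> R) (E F : pred W) : interpretation p Pr ->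
  \sum_w Pr w * (E w)%:R + \sum_w Pr w * (F w)%:R - 1 <= \sum_w Pr w * (E w && F w)%:R.
Proof.
move=> [h0 h1 _].
suff : \sum_w Pr w * (E w)%:R + \sum_w Pr w * (F w)%:R - \sum_w Pr w <=
  \sum_w Pr w * (E w && F w)%:R by rewrite h1.
rewrite -subr_ge0 -big_split /= -!sumrB.
apply: sumr_ge0 => w _; have := h0 w.
by case: (E w); case: (F w) => /= hw; rewrite ?mulr1 ?mulr0; lra.
Qed.

Lemma lower_Fp n (Pr : W -> R) (T : W) : #|T| = n -> interpretation p Pr -> Fp T <= prob_all Pr T.
Proof.
move=> cT hi; elim: n T cT => [|n IH] T cT.
  move/eqP: cT; rewrite cards_eq0 => /eqP ->; rewrite Fp0 prob_allE.
  case: hi => _ h1 _; rewrite (eq_bigr (fun w => Pr w)) ?h1 // => w _.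
  by rewrite sub0set mulr1.
have [t tT] : exists t, t \in T.
  by apply/set0Pn; rewrite -card_gt0 cT.
have cT0 : #|T :\ t| = n by move: cT; rewrite (cardsD1 t T) tT add1n => [[]].
have := IH _ cT0; rewrite (Fp_step tT) !prob_allE => h.
rewrite (eq_bigr (fun w => Pr w * ((T :\ t \subset w) && (t \in w))%:R)); last first.
  by move=> w _; rewrite (sub_split w tT).
have := two_event (fun w => T :\ t \subset w) (fun w => t \in w) hi.
rewrite (margE _ hi) => h2; lra.
Qed.

Lemma lower (Pr : W -> R) (T : W) : interpretation p Pr -> frechet_bound p T <= prob_all Pr T.
Proof.
move=> hi; rewrite /frechet_bound ge_max; apply/andP; split.
  by rewrite prob_allE; apply: sumr_ge0 => w _; apply: mulr_ge0 => //; case: hi.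
exact: lower_Fp erefl hi.
Qed.

Lemma max_aux (x y : R) : y <= 1 -> Num.max 0 (Num.max 0 x + y - 1) = Num.max 0 (x + y - 1).
Proof.
move=> y1; case: (leP 0 x) => h; first by [].
case: leP => h1; case: leP => h2; lra.
Qed.

Definition swappable (T : W) (t : I) :=
  let E := fun w : W => T :\ t \subset w in
  let F := fun w : W => t \in w in
  exists (s1 s2 : W -> W -> W),
  [/\ (forall w1 w2, E w1 && F w1 -> ~~ E w2 && ~~ F w2 ->
     [/\ E (s1 w1 w2), ~~ F (s1 w1 w2), ~~ E (s2 w1 w2) & F (s2 w1 w2)]),
   (forall w1 w2 i, E w1 && F w1 -> ~~ E w2 && ~~ F w2 ->
     ((i \in s1 w1 w2) + (i \in s2 w1 w2) = (i \in w1) + (i \in w2))%N) &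
   (forall w1 w2, E w1 && F w1 -> ~~ E w2 && ~~ F w2 ->
     ~ violates tup IC w1 -> ~ violates tup IC w2 ->
     ~ violates tup IC (s1 w1 w2) /\ ~ violates tup IC (s2 w1 w2))].

Lemma exist_ind n (T : W) : #|T| = n -> pdb_consistent tup p IC -> (forall i, p i <= 1) ->
  (forall T' : W, T' \subset T -> T' != set0 -> exists2 t, t \in T' & swappable T' t) ->
  exists2 Pr, model tup p IC Pr & prob_all Pr T = frechet_bound p T.
Proof.
move=> cT [Pr0 hPr0] p1; elim: n T cT => [|n IH] T cT hsw.
  move/eqP: cT; rewrite cards_eq0 => /eqP ->; exists Pr0 => //.
  rewrite /frechet_bound -/(Fp set0) Fp0 max_r ?ler01 // prob_allE.
  case: hPr0 => [[_ h1 _] _]; rewrite (eq_bigr (fun w => Pr0 w)) ?h1 // => w _.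
  by rewrite sub0set mulr1.
have [t tT hs] : exists2 t, t \in T & swappable T t.
  by apply: hsw => //; rewrite -card_gt0 cT.
case: hs => s1 [s2 [hS hM hV]].
have cT0 : #|T :\ t| = n by move: cT; rewrite (cardsD1 t T) tT add1n => [[]].
have [Pr1 hm1 hp1] := IH _ cT0 (fun T' sT' => hsw T' (subset_trans sT' (subD1set T t))).
have [[g0 g1 g2] gv] := hm1.
pose E := fun w : W => T :\ t \subset w.
pose F := fun w : W => t \in w.
have hm' := Pr'_model (Pr:=Pr1) (E:=E) (F:=F) (s1:=s1) (s2:=s2) g0 g1 hM hV gv hm1.
exists (Pr' Pr1 E F s1 s2) => //.
rewrite prob_allE (eq_bigr (fun w => Pr' Pr1 E F s1 s2 w * (E w && F w)%:R)); last first.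
  by move=> w _; rewrite (sub_split w tT).
rewrite (Pr'_final g0 g1 hS) -prob_allE hp1 (margE _ (proj1 hm1)).
rewrite /frechet_bound -/(Fp T) -/(Fp (T :\ t)) (Fp_step tT).
have pt1 := p1 t.
exact: max_aux.
Qed.

End Main.

Section Matr.
Variables (disp : Order.disp_t) (V : orderType disp) (Rel : eqType).
Variables (I : finType) (tup : I -> dbtuple V Rel) (IC : seq (denial V Rel)).
Local Notation W := {set I}.

Definition WC (T : W) := forall e e', hyperedge tup IC e -> hyperedge tup IC e' ->
  T :&: e \subset T :&: e' \/ T :&: e' \subset T :&: e.

Lemma matr_WC (T : W) : matryoshka (in_Int tup IC T) -> WC T.
Proof.
move=> H e e' he he'.
have [->|/proper_sub h|/proper_sub h] := H _ _ (ex_intro2 _ _ e he erefl) (ex_intro2 _ _ e' he' erefl).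
- by left.
- by left.
- by right.
Qed.

Lemma WC_sub (T T0 : W) : T0 \subset T -> WC T -> WC T0.
Proof.
move=> /subsetP sT H e e' he he'.
have sub : forall A B : W, T :&: A \subset T :&: B -> T0 :&: A \subset T0 :&: B.
  move=> A B /subsetP h; apply/subsetP => u; rewrite !inE => /andP [u0 uA].
  have := h u; rewrite !inE (sT _ u0) uA => /(_ isT) /andP [_ ->]; by rewrite u0.
by case: (H e e' he he') => h; [left|right]; apply: sub.
Qed.

Lemma WC_good (T : W) : WC T -> T != set0 ->
  exists2 t, t \in T & forall e, hyperedge tup IC e -> t \in e -> T \subset e.
Proof.
move=> H /set0Pn [t0 t0T]; apply: NNPP => N.
have bad : forall t, t \in T -> exists e, [/\ hyperedge tup IC e, t \in e & ~~ (T \subset e)].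
  move=> t tT; apply: NNPP => N2; apply: N; exists t => // e he te.
  apply: NNPP => N3; apply: N2; exists e; split => //; exact/negP.
have step : forall e, hyperedge tup IC e -> ~~ (T \subset e) -> exists e',
    [/\ hyperedge tup IC e', ~~ (T \subset e') & (#|T :&: e| < #|T :&: e'|)%N].
  move=> e he nTe.
  have [u uT ue] : exists2 u, u \in T & u \notin e by apply/subsetPn.
  have [e' [he' ue' nTe']] := bad u uT.
  exists e'; split => //.
  case: (H e e' he he') => h; last first.
    by move/subsetP: h => /(_ u); rewrite !inE uT ue' (negbTE ue) => /(_ isT).
  apply: proper_card; rewrite properE h /=; apply/subsetPn; exists u.
    by rewrite inE uT.
  by rewrite inE (negbTE ue) andbF.
have claim : forall n e, (#|T| - #|T :&: e| <= n)%N -> hyperedge tup IC e -> ~~ (T \subset e) -> False.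
  elim=> [|n IH] e le he nTe; have [e' [he' nTe' lt]] := step e he nTe;
  have := subset_leq_card (subsetIl T e'); move=> c'.
    lia.
  by apply: (IH e') => //; lia.
have [e [he _ nTe]] := bad t0 t0T.
exact: (claim _ e (leqnn _) he nTe).
Qed.

Lemma WC_swappable (T : W) : WC T ->
  forall T' : W, T' \subset T -> T' != set0 -> exists2 t, t \in T' & swappable tup IC T' t.
Proof.
move=> H T' sT' n0; have H' := WC_sub sT' H.
have [t tT good] := WC_good H' n0; exists t => //.
exists (fun w1 w2 => w1 :\ t), (fun w1 w2 => t |: w2); split.
- move=> w1 w2 /andP [E1 F1] /andP [E2 F2] /=; split.
  + by apply/subsetP => u; rewrite !in_setD1 => /andP [ut uT]; rewrite ut (subsetP E1) // in_setD1 ut uT.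
  + by rewrite in_setD1 eqxx.
  + apply/negP => h; apply: (negP E2); apply/subsetP => u uT.
    have := subsetP h u uT; rewrite in_setU1; move: uT; rewrite in_setD1 => /andP [ut _].
    by rewrite (negbTE ut).
  + by rewrite setU11.
- move=> w1 w2 i /andP [_ F1] /andP [_ F2]; rewrite in_setD1 in_setU1.
  by case: eqP => [->|_] /=; rewrite ?F1 ?(negbTE F2).
- move=> w1 w2 _ /andP [E2 _] v1 v2; split.
    by move=> h; apply: v1; apply: violates_mono h; exact: subD1set.
  move=> /violates_hyperedge [e he se].
  case te: (t \in e).
    have Te := good e he te; apply: (negP E2); apply/subsetP => u.
    rewrite in_setD1 => /andP [ut uT].
    by have := subsetP se u (subsetP Te u uT); rewrite in_setU1 (negbTE ut).
  apply: v2; apply: (hyperedge_violates he); apply/subsetP => x xe.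
  have := subsetP se x xe; rewrite in_setU1; case: eqP => [ex|_ //].
  by move: te; rewrite -ex xe.
Qed.
End Matr.

Section Disc.
Variables (disp : Order.disp_t) (V : orderType disp) (Rel : eqType).
Variables (I : finType) (tup : I -> dbtuple V Rel) (IC : seq (denial V Rel)).
Local Notation W := {set I}.

Definition conn (t v : I) := exists (e1 : W) (es : seq W),
  [/\ AllIn (hyperedge tup IC) (e1 :: es),
      path (fun A B : {set I} => ~~ [disjoint A & B]) e1 es,
      t \in e1 & v \in last e1 es].

Lemma conn_hg t v : conn t v -> hg_connected tup IC t v.
Proof.
move=> [e1 [es [ha pth te1]]]; case: (shortenP pth) => p' pth' uq sub vl.
exists e1, p'; split => //.
move: ha; rewrite !AllInP => ha x; rewrite in_cons => /orP [/eqP ->|xp].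
  by apply: ha; rewrite mem_head.
by apply: ha; rewrite in_cons (sub _ xp) orbT.
Qed.

Lemma conn_ext t x e v : hyperedge tup IC e -> x \in e -> v \in e ->
  x = t \/ conn t x -> conn t v.
Proof.
move=> he xe ve [xt|[e1 [es [ha pth te1 xl]]]].
  by exists e, [::]; split => //=; rewrite -xt.
exists e1, (rcons es e); split => //.
- move: ha; rewrite !AllInP => ha y; rewrite -rcons_cons mem_rcons in_cons.
  by case/orP => [/eqP ->|]; [|apply: ha].
- rewrite rcons_path pth /=; apply/negP => dj.
  by move: (disjointFr dj xl); rewrite xe.
- by rewrite last_rcons.
Qed.

Definition Cset (t : I) : W := t |: [set v | `[< conn t v >]].

Lemma Cset_hyper t e x : hyperedge tup IC e -> x \in e -> x \in Cset t -> e \subset Cset t.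
Proof.
move=> he xe; rewrite !inE => xC; apply/subsetP => v ve.
rewrite !inE; apply/orP; right; apply/asboolP; apply: (conn_ext he xe ve).
case/orP: xC => [/eqP ->|/asboolP]; by [left|right].
Qed.

Lemma swapC_nv (C : W) (hC : forall e x, hyperedge tup IC e -> x \in e -> x \in C -> e \subset C)
  (w1 w2 : W) : ~ violates tup IC w1 -> ~ violates tup IC w2 ->
  ~ violates tup IC ((w1 :\: C) :|: (w2 :&: C)).
Proof.
move=> v1 v2 /violates_hyperedge [e he se].
case: (pickP (fun x => (x \in e) && (x \in C))) => [x /andP [xe xC]|none].
  have eC := hC e x he xe xC.
  apply: v2; apply: (hyperedge_violates he); apply/subsetP => y ye.
  have := subsetP se y ye; rewrite !inE (subsetP eC y ye) /=; by rewrite andbT.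
apply: v1; apply: (hyperedge_violates he); apply/subsetP => y ye.
have := subsetP se y ye; have := none y; rewrite ye /= => yC.
by rewrite !inE yC /= andbF orbF.
Qed.

Lemma disc_swappable (T : W) : pairwise_disconnected tup IC T ->
  forall T' : W, T' \subset T -> T' != set0 -> exists2 t, t \in T' & swappable tup IC T' t.
Proof.
move=> H T' sT' /set0Pn [t tT]; exists t => //.
have tC : t \in Cset t by rewrite !inE eqxx.
have nC : forall u, u \in T' :\ t -> u \notin Cset t.
  move=> u; rewrite in_setD1 => /andP [ut uT]; rewrite !inE (negbTE ut) /=.
  apply/negP => /asboolP /conn_hg; apply: H; [exact: (subsetP sT')|exact: (subsetP sT')|].
  by rewrite eq_sym.
have hC : forall e x, hyperedge tup IC e -> x \in e -> x \in Cset t -> e \subset Cset t.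
  move=> e x; exact: Cset_hyper.
exists (fun w1 w2 => (w1 :\: Cset t) :|: (w2 :&: Cset t)),
       (fun w1 w2 => (w2 :\: Cset t) :|: (w1 :&: Cset t)); split.
- move=> w1 w2 /andP [E1 F1] /andP [E2 F2] /=; split.
  + apply/subsetP => u uT; rewrite in_setU in_setD (nC u uT) (subsetP E1 u uT) //.
  + by rewrite in_setU in_setD in_setI tC (negbTE F2).
  + have [u uT uw2] := subsetPn E2; apply/subsetPn; exists u => //.
    by rewrite in_setU in_setD in_setI (negbTE (nC u uT)) (negbTE uw2) /= andbF.
  + by rewrite in_setU in_setI tC F1 orbT.
- move=> w1 w2 i _ _; rewrite !in_setU !in_setD !in_setI.
  by case: (i \in Cset t); case: (i \in w1); case: (i \in w2).
- move=> w1 w2 _ _ v1 v2; split; exact: swapC_nv.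
Qed.

End Disc.

Local Open Scope ring_scope.

Theorem lemma1
  (disp : Order.disp_t) (V : orderType disp) (Rel : eqType) (ar : Rel -> nat)
  (I : finType) (tup : I -> dbtuple V Rel) (R : realType) (p : I -> R)
  (IC : seq (denial V Rel))
  (tup_inj : injective tup)
  (tup_wf : forall i, wf_tuple ar (tup i))
  (p_range : forall i, 0 <= p i <= 1)
  (IC_wf : AllIn (wf_denial ar) IC)
  (Hcons : pdb_consistent tup p IC)
  (T : {set I}) :
  (pairwise_disconnected tup IC T \/ matryoshka (in_Int tup IC T) ->
     is_pmin tup p IC T (frechet_bound p T)) /\
  (~ (pairwise_disconnected tup IC T \/ matryoshka (in_Int tup IC T)) ->
     pmin_lower_bound tup p IC T (frechet_bound p T)).
Proof.
have p1 : forall i, p i <= 1 by move=> i; case/andP: (p_range i).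
split; last by move=> _ Pr [hi _]; exact: lower.
move=> H.
have sw : forall T' : {set I}, T' \subset T -> T' != set0 ->
    exists2 t, t \in T' & swappable tup IC T' t.
  case: H => [hd|hm]; [exact: disc_swappable | exact: (WC_swappable (matr_WC hm))].
have [Pr hm hp] := exist_ind erefl Hcons p1 sw.
split; first by exists Pr.
by move=> Pr' [hi _]; exact: lower.
Qed.
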